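(* Let $q$ be a prime power and let $f:\mathbb{F}_q^n \rightarrow \mathbb{F}_q$ be an unknown multilinear polynomial of degree $d$ over $\mathbb{F}_q$. Then there is an exact quantum query algorithm which learns $f$ with certainty using $1 + \sum_{i=1}^d 2^{i-1} \binom{n}{i-1}$ queries to $f$; in particular this is $O(n^{d-1})$ for constant $d$.
   Context: $\mathbb{F}_q$ denotes the finite field with $q$ elements. A function $f:\mathbb{F}_q^n \rightarrow \mathbb{F}_q$ is a multilinear polynomial of degree $d$ if it can be written as $f(x) = \sum_{S \subseteq [n],|S|\le d} \alpha_S \prod_{i \in S} x_i$ for some coefficients $\alpha_S \in \mathbb{F}_q$, where $[n]=\{1,\dots,n\}$ and the empty product equals $1$. In the quantum query model, the algorithm accesses $f$ only via the unitary oracle $O_f \ket{x}\ket{y} = \ket{x}\ket{y + f(x)}$ for $x \in \mathbb{F}_q^n$, $y \in \mathbb{F}_q$ (interleaved with arbitrary oracle-independent unitaries and measurements); the number of queries is the number of applications of $O_f$. To learn $f$ means to output all coefficients $\alpha_S$; an exact algorithm does so with probability $1$ for every such $f$. *)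

(* Defs.v *)
From HB Require Import structures.
From mathcomp Require Import all_boot all_order all_algebra all_field.
Set Implicit Arguments. Unset Strict Implicit. Unset Printing Implicit Defensive.
Import GRing.Theory Num.Theory.
Local Open Scope ring_scope.

Section QueryLearning.
Variables (F : finFieldType) (n : nat).

(* Coefficient vector (alpha_S)_{S subset [n]} of a multilinear polynomial. *)
Definition coeffs := {ffun {set 'I_n} -> F}.

Definition deg_le (d : nat) (alpha : coeffs) : Prop :=
  forall S : {set 'I_n}, (d < #|S|)%N -> alpha S = 0.

Definition mleval (alpha : coeffs) (x : {ffun 'I_n -> F}) : F :=
  \sum_(S : {set 'I_n}) alpha S * \prod_(i in S) x i.

(* Computational basis of the state space: |x>|y>|w>, with x in F^n, y in F
   (query registers) and w in an arbitrary finite workspace W. *)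
Definition qidx (W : finType) := ({ffun 'I_n -> F} * F * W)%type.
Definition qdim (W : finType) := #|{: qidx W}|.
Definition qvec (W : finType) := 'cV[algC]_(qdim W).
Definition qop (W : finType) := 'M[algC]_(qdim W).

Definition unitary (W : finType) (U : qop W) : Prop :=
  U *m (map_mx Num.conj U)^T = 1%:M.

Definition oracle (W : finType) (g : {ffun 'I_n -> F} -> F) : qop W :=
  \matrix_(i, j) (let: (x, y, w) := (enum_val j : qidx W) in
                  if enum_val i == (x, y + g x, w) then 1 else 0).

Definition basis_vec (W : finType) (s : qidx W) : qvec W :=
  \col_i (if enum_val i == s then 1 else 0).

Fixpoint run (W : finType) (U : nat -> qop W) (O : qop W) (s0 : qvec W)
    (k : nat) : qvec W :=
  match k with
  | 0 => U 0%N *m s0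
  | k'.+1 => U k'.+1 *m (O *m run U O s0 k')
  end.

Definition succ_prob (W : finType) (out : qidx W -> coeffs) (st : qvec W)
    (alpha : coeffs) : algC :=
  \sum_(i | out (enum_val i) == alpha) `|st i 0| ^+ 2.

Definition exact_learner (d T : nat) (W : finType) (s0 : qidx W)
    (U : nat -> qop W) (out : qidx W -> coeffs) : Prop :=
  (forall k, (k <= T)%N -> unitary (U k)) /\
  forall alpha : coeffs, deg_le d alpha ->
    succ_prob out (run U (oracle W (mleval alpha)) (basis_vec s0) T) alpha = 1.

End QueryLearning.

Definition query_bound (n d : nat) : nat :=
  (1 + \sum_(1 <= i < d.+1) 2 ^ (i - 1) * 'C(n, i - 1))%N.

(* Main.v *)
Require Import Defs.
From HB Require Import structures.
From mathcomp Require Import all_boot all_order all_algebra all_field.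
From mathcomp Require Import all_fingroup all_character.
From mathcomp Require Import ring.
Set Implicit Arguments. Unset Strict Implicit. Unset Printing Implicit Defensive.
Import GRing.Theory Num.Theory.

Local Open Scope ring_scope.

Section Infra.
Variables (F : finFieldType) (n : nat) (W : finType).
Local Notation idx := (qidx F n W).
Local Notation mat := (qop F n W).
Local Notation vct := (qvec F n W).

Definition vec (phi : idx -> algC) : vct := \col_i phi (enum_val i).
Lemma vecP (phi psi : idx -> algC) : (forall s, phi s = psi s) -> vec phi = vec psi.
Proof. by move=> H; apply/matrixP => i k; rewrite !mxE H. Qed.

Definition mk (K : idx -> idx -> algC) : mat :=
  \matrix_(i, j) K (enum_val i) (enum_val j).

Lemma sum_idx (G : idx -> algC) :
  \sum_(j < qdim F n W) G (enum_val j) = \sum_t G t.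
Proof. by rewrite (big_enum_val G). Qed.

Lemma mk_vec K phi : mk K *m vec phi = vec (fun s => \sum_t K s t * phi t).
Proof.
apply/matrixP => i k; rewrite !mxE; rewrite -sum_idx.
by apply: eq_bigr => j _; rewrite !mxE.
Qed.

Lemma mk_mul K L : mk K *m mk L = mk (fun s u => \sum_t K s t * L t u).
Proof.
apply/matrixP => i k; rewrite !mxE -sum_idx.
by apply: eq_bigr => j _; rewrite !mxE.
Qed.

Lemma mk1 : mk (fun s t => (s == t)%:R) = 1%:M.
Proof.
by apply/matrixP => i j; rewrite !mxE (inj_eq enum_val_inj).
Qed.

Lemma mk_unitary K :
  (forall s u, \sum_t K s t * (K u t)^* = (s == u)%:R) -> unitary (mk K).
Proof.
move=> H; rewrite /unitary -mk1; apply/matrixP => i k; rewrite !mxE.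
rewrite -H -sum_idx; apply: eq_bigr => j _; by rewrite /mk !mxE.
Qed.

Lemma unitary_mul (A B : mat) : unitary A -> unitary B -> unitary (A *m B).
Proof.
rewrite /unitary => HA HB.
rewrite map_mxM trmx_mul mulmxA -(mulmxA A) HB mulmx1 HA //.
Qed.

Lemma unitary1 : unitary (1%:M : mat).
Proof. by rewrite /unitary map_mx1 trmx1 mulmx1. Qed.

Definition pk (sg : idx -> idx) : mat := mk (fun s t => (s == sg t)%:R).

Lemma pk_vec sg sg' phi : cancel sg sg' -> cancel sg' sg ->
  pk sg *m vec phi = vec (fun s => phi (sg' s)).
Proof.
move=> c1 c2; rewrite mk_vec; apply: vecP => s.
rewrite (bigD1 (sg' s)) //= c2 eqxx mul1r big1 ?addr0 // => t /negPf ne.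
suff -> : (s == sg t) = false by rewrite mul0r.
by apply/negbTE; apply: contraFN ne => /eqP ->; rewrite c1.
Qed.

Lemma pk_unitary sg sg' : cancel sg sg' -> cancel sg' sg -> unitary (pk sg).
Proof.
move=> c1 c2; apply: mk_unitary => s u.
rewrite (bigD1 (sg' s)) //= c2 eqxx mul1r big1 ?addr0.
  by rewrite eq_sym; case: (s == u); rewrite ?conjC1 ?conjC0.
move=> t /negPf ne.
suff -> : (s == sg t) = false by rewrite mul0r.
by apply/negbTE; apply: contraFN ne => /eqP ->; rewrite c1.
Qed.

Definition vbas (s : idx) (c : algC) := fun t => c * (t == s)%:R.

Lemma sum_bas (G : idx -> algC) s c : \sum_t G t * vbas s c t = G s * c.
Proof.
rewrite (bigD1 s) //= /vbas eqxx mulr1 big1 ?addr0 // => t /negPf ->.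
by rewrite mulr0 mulr0.
Qed.

End Infra.

Local Open Scope ring_scope.

Section Compile.
Variables (F : finFieldType) (n : nat) (W : finType).
Local Notation mat := (qop F n W).
Local Notation vct := (qvec F n W).

Inductive instr := Gate of mat | Query of mat & mat.

Definition exec (O : mat) (l : seq instr) (v : vct) : vct :=
  foldl (fun v i => match i with Gate M => M *m v | Query P Pi => Pi *m (O *m (P *m v)) end) v l.

Lemma exec_cat O l1 l2 v : exec O (l1 ++ l2) v = exec O l2 (exec O l1 v).
Proof. by rewrite /exec foldl_cat. Qed.

Fixpoint compile (l : seq instr) : mat * seq mat :=
  match l with
  | [::] => (1%:M, [::])
  | Gate M :: l' => let: (U0, r) := compile l' in (U0 *m M, r)
  | Query P Pi :: l' => let: (U0, r) := compile l' in (P, (U0 *m Pi) :: r)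
  end.

Fixpoint qcount (l : seq instr) : nat :=
  match l with
  | [::] => 0
  | Gate _ :: l' => qcount l'
  | Query _ _ :: l' => (qcount l').+1
  end.

Lemma qcount_cat l1 l2 : qcount (l1 ++ l2) = (qcount l1 + qcount l2)%N.
Proof. by elim: l1 => //= [[M|P Pi]] l IH //=; rewrite IH. Qed.

Definition evalU O (c : mat * seq mat) (v : vct) :=
  foldl (fun a U => U *m (O *m a)) (c.1 *m v) c.2.

Lemma evalU_compile O l v : evalU O (compile l) v = exec O l v.
Proof.
elim: l v => [|[M|P Pi] l IH] v /=; first by rewrite /evalU /= mul1mx.
  by move: (IH (M *m v)); rewrite /evalU; case: (compile l) => U0 r /=; rewrite mulmxA.
move: (IH (Pi *m (O *m (P *m v)))); rewrite /evalU; case: (compile l) => U0 r /= <-.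
by rewrite !mulmxA.
Qed.

Lemma size_compile l : size (compile l).2 = qcount l.
Proof.
elim: l => [|[M|P Pi] l IH] //=; by case: (compile l) IH => U0 r /= ->.
Qed.

Definition Useq (c : mat * seq mat) := c.1 :: c.2.

Lemma run_nth O (c : mat * seq mat) s0 k : (k <= size c.2)%N ->
  run (fun i => nth 1%:M (Useq c) i) O s0 k =
  foldl (fun a U => U *m (O *m a)) (c.1 *m s0) (take k c.2).
Proof.
case: c => U0 r /=; elim: k => [|k IH] Hk /=; first by rewrite take0.
rewrite IH ?(ltnW Hk) // (take_nth 1%:M Hk) -cats1 foldl_cat //.
Qed.

Lemma run_compile O l s0 :
  run (fun i => nth 1%:M (Useq (compile l)) i) O s0 (qcount l) = exec O l s0.
Proof.
rewrite run_nth ?size_compile // -size_compile take_size.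
exact: evalU_compile.
Qed.

Definition instr_ok (i : instr) :=
  match i with Gate M => unitary M | Query P Pi => unitary P /\ unitary Pi end.

Fixpoint ok_list (l : seq instr) : Prop :=
  match l with [::] => True | i :: l' => instr_ok i /\ ok_list l' end.

Lemma ok_list_cat l1 l2 : ok_list l1 -> ok_list l2 -> ok_list (l1 ++ l2).
Proof. by elim: l1 => //= i l IH [H1 H2] H3; split => //; apply: IH. Qed.

Lemma compile_unitary l : ok_list l ->
  forall k, unitary (nth 1%:M (Useq (compile l)) k).
Proof.
elim: l => [|[M|P Pi] l IH] /=.
- by move=> _ [|[|k]] /=; rewrite ?nth_nil; apply: unitary1.
- move=> [HM Hl] k; move: (IH Hl) => {}IH; case: (compile l) IH => U0 r /= IH.
  case: k => [|k] /=; last exact: (IH k.+1).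
  by apply: unitary_mul => //; apply: (IH 0%N).
- move=> [[HP HPi] Hl] k; move: (IH Hl) => {}IH; case: (compile l) IH => U0 r /= IH.
  case: k => [|[|k]] //=; last exact: (IH k.+1).
  by apply: unitary_mul => //; apply: (IH 0%N).
Qed.
End Compile.

Local Open Scope ring_scope.

Section Char.
Variable F : finFieldType.

Let gT : finGroupType := FinRing.Field_to_finGroup F.
Let G := [set: gT]%G.

Lemma Nirr_gt1 : (1 < Nirr G)%N.
Proof.
rewrite NirrE. have /eqP -> : #|classes G| == #|G|.
  by rewrite -card_classes_abelian; apply: FinRing.zmod_abelian.
rewrite cardsT (cardD1 (0 : F)) (cardD1 (1 : F)) !inE oner_neq0 /=. by [].
Qed.

Definition ichi : Iirr G := Ordinal Nirr_gt1.
Definition chi (z : F) : algC := 'chi_ichi (z : gT).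

Lemma chi_lin : 'chi_ichi \is a linear_char.
Proof. by move/char_abelianP: (FinRing.zmod_abelian (G : {set gT})). Qed.

Lemma chiD a b : chi (a + b) = chi a * chi b.
Proof. exact: (lin_charM chi_lin) (in_setT (a : gT)) (in_setT (b : gT)). Qed.

Lemma chi0 : chi 0 = 1.
Proof. exact: (lin_char1 chi_lin). Qed.

Lemma chi_conj a : (chi a)^* = chi (- a).
Proof. by rewrite -(lin_charV_conj chi_lin) ?in_setT. Qed.

Lemma chiN a : chi a * chi (- a) = 1.
Proof. by rewrite -chiD subrr chi0. Qed.

Lemma chi_nontriv : exists z, chi z != 1.
Proof.
apply/existsP; rewrite -negb_forall; apply/negP => /forallP H.
have : 'chi_ichi = 'chi_0.
  apply/cfunP => x; rewrite irr0 cfun1E in_setT; exact/eqP/H.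
by move/irr_inj.
Qed.

Lemma sum_chi : \sum_z chi z = 0.
Proof.
have [z0 nz] := chi_nontriv.
have E : \sum_z chi z = chi z0 * \sum_z chi z.
  rewrite mulr_sumr (reindex_inj (addrI z0)) /=.
  by apply: eq_bigr => z _; rewrite chiD.
apply/eqP; move/eqP: E; rewrite -subr_eq0 -{1}(mul1r (\sum_z _)) -mulrBl.
by rewrite mulf_eq0 subr_eq0 eq_sym (negbTE nz).
Qed.

Lemma sum_chi_mul b : \sum_z chi (b * z) = if b == 0 then #|F|%:R else 0.
Proof.
have [->|nz] := eqVneq b 0.
  by under eq_bigr do rewrite mul0r chi0; rewrite sumr_const.
by rewrite -[RHS]sum_chi [RHS](reindex_inj (mulfI nz)).
Qed.

Lemma chi_sum (I : finType) (f : I -> F) : chi (\sum_i f i) = \prod_i chi (f i).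
Proof. exact: (big_morph chi chiD chi0). Qed.

Variable n : nat.
Definition dot (x x' : {ffun 'I_n -> F}) := \sum_i x i * x' i.

Lemma sum_chi_dot (a b : {ffun 'I_n -> F}) :
  \sum_x chi (dot a x - dot b x) = if a == b then (#|F| ^ n)%:R else 0.
Proof.
have E x : chi (dot a x - dot b x) = \prod_i chi ((a i - b i) * x i).
  rewrite -chi_sum /dot -sumrB; congr chi; apply: eq_bigr => i _; ring.
under eq_bigr do rewrite E.
rewrite -(bigA_distr_bigA (fun i z => chi ((a i - b i) * z))).
under eq_bigr do rewrite sum_chi_mul subr_eq0.
have [->|ne] := eqVneq a b.
  rewrite (eq_bigr (fun _ => #|F|%:R)) => [|i _]; last by rewrite eqxx.
  by rewrite prodr_const card_ord natrX.
have [i Hi] : exists i, a i != b i.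
  by apply/existsP; rewrite -negb_forall; apply: contra ne => /forallP H; apply/eqP/ffunP => i; apply/eqP.
by rewrite (bigD1 i) //= (negbTE Hi) mul0r.
Qed.

Definition Ninv : algC := (sqrtC ((#|F| ^ n.+1)%:R))^-1.

Lemma Ninv_conj : Ninv^* = Ninv.
Proof. rewrite /Ninv fmorphV; congr (_^-1); apply: geC0_conj; by rewrite sqrtC_ge0 ler0n. Qed.

Lemma cardF_gt0 : (0 < #|F|)%N.
Proof. by apply/card_gt0P; exists 0. Qed.

Lemma Ninv2 : Ninv * Ninv * (#|F| ^ n.+1)%:R = 1.
Proof.
have hq : (#|F| ^ n.+1)%:R != 0 :> algC by rewrite pnatr_eq0 -lt0n expn_gt0 cardF_gt0.
by rewrite /Ninv -invfM -expr2 sqrtCK mulVf.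
Qed.
End Char.

Lemma chi_norm (F : finFieldType) (a : F) : `|chi a| = 1.
Proof. exact: (normC_lin_char (chi_lin F)) (in_setT (a : FinRing.Field_to_finGroup F)). Qed.

Local Open Scope ring_scope.

Section Gates.
Variables (F : finFieldType) (n : nat) (W : finType).
Local Notation idx := (qidx F n W).
Local Notation mat := (qop F n W).
Local Notation vct := (qvec F n W).
Local Notation vF := {ffun 'I_n -> F}.
Local Notation chi := (@chi F).
Local Notation Ninv := (Ninv F n).
Local Notation dot := (@dot F n).

Lemma sum_pair (A B : finType) (G : A * B -> algC) :
  \sum_t G t = \sum_a \sum_b G (a, b).
Proof. by rewrite pair_bigA; apply: eq_bigr => [[a b]]. Qed.

Lemma sum_idx3 (G : idx -> algC) :
  \sum_t G t = \sum_(x : vF) \sum_(y : F) \sum_(w : W) G (x, y, w).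
Proof. by rewrite sum_pair sum_pair. Qed.

Lemma ortho (e : F) (x x2 : vF) (y y2 : F) : e != 0 ->
  \sum_(x' : vF) \sum_(y' : F)
     chi (e * (dot x x' + y * y')) * chi (- (e * (dot x2 x' + y2 * y')))
  = ((x == x2) && (y == y2))%:R * (#|F| ^ n.+1)%:R.
Proof.
move=> ne.
pose ex := [ffun i => e * x i]; pose ex2 := [ffun i => e * x2 i].
have E x' y' : chi (e * (dot x x' + y * y')) * chi (- (e * (dot x2 x' + y2 * y')))
    = chi (dot ex x' - dot ex2 x') * chi ((e * y - e * y2) * y').
  rewrite -!chiD; congr chi.
  have -> : dot ex x' = e * dot x x'.
    by rewrite /dot mulr_sumr; apply: eq_bigr => i _; rewrite ffunE mulrA.
  have -> : dot ex2 x' = e * dot x2 x'.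
    by rewrite /dot mulr_sumr; apply: eq_bigr => i _; rewrite ffunE mulrA.
  ring.
under eq_bigr do under eq_bigr do rewrite E.
under eq_bigr do rewrite -mulr_sumr sum_chi_mul.
rewrite -mulr_suml sum_chi_dot.
have -> : (ex == ex2) = (x == x2).
  apply/eqP/eqP => [H|Hx]; last by rewrite /ex /ex2 Hx.
  apply/ffunP => i.
  by move/ffunP: H => /(_ i); rewrite !ffunE => /(mulfI ne).
have -> : (e * y - e * y2 == 0) = (y == y2) by rewrite -mulrBr mulf_eq0 (negbTE ne) subr_eq0.
case: (x == x2); case: (y == y2); rewrite /= ?mul0r ?mulr0 ?mul1r //.
by rewrite expnS natrM mulrC.
Qed.

Definition Qe (e : F) : mat :=
  mk (fun s t => (s.2 == t.2)%:R * chi (e * (dot s.1.1 t.1.1 + s.1.2 * t.1.2)) * Ninv).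

Lemma Qe_unitary e : e != 0 -> unitary (Qe e).
Proof.
move=> ne; apply: mk_unitary => [[[x y] w]] [[x2 y2] w2] /=.
rewrite sum_idx3.
transitivity (\sum_(x' : vF) \sum_(y' : F) ((w == w2)%:R * (Ninv * Ninv) *
   (chi (e * (dot x x' + y * y')) * chi (- (e * (dot x2 x' + y2 * y')))))).
  apply: eq_bigr => x' _; apply: eq_bigr => y' _.
  rewrite (bigD1 w) //= big1 ?addr0; last first.
    by move=> w' nw; rewrite eq_sym (negbTE nw) !mul0r.
  rewrite !rmorphM /= chi_conj Ninv_conj eqxx.
  rewrite [w2 == w]eq_sym; case: (w == w2); rewrite ?conjC1 ?conjC0 /=; ring.
under eq_bigr do rewrite -mulr_sumr; rewrite -mulr_sumr ortho //.
rewrite !xpair_eqE.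
case: (w == w2); case: (x == x2); case: (y == y2); rewrite /= ?mul0r ?mul1r ?mulr0 //.
by rewrite Ninv2.
Qed.

Definition rstate (m : W) (om : algC) (h : vF -> F) : idx -> algC :=
  fun t => om * (t.2 == m)%:R * chi (t.1.2 + h t.1.1) * Ninv.

Lemma dot0 x : dot x [ffun => 0] = 0.
Proof. by rewrite /dot big1 // => i _; rewrite ffunE mulr0. Qed.

Lemma Qe1_bas m om :
  Qe 1 *m vec (vbas ([ffun => 0], 1, m) om) = vec (rstate m om (fun _ => 0)).
Proof.
rewrite mk_vec; apply: vecP => s; rewrite sum_bas /rstate /= dot0 add0r addr0 mulr1 mul1r.
ring.
Qed.

Lemma Qm_rstate m om h c a : (forall x, h x = c + dot a x) ->
  Qe (-1) *m vec (rstate m om h) = vec (vbas (a, 1, m) (om * chi c)).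
Proof.
move=> Hh; rewrite mk_vec; apply: vecP => [[[x y] w]] /=.
rewrite sum_idx3.
transitivity (\sum_(x' : vF) \sum_(y' : F) ((w == m)%:R * (Ninv * Ninv) * om * chi c *
   (chi (-1 * (dot x x' + y * y')) * chi (- (-1 * (dot a x' + 1 * y')))))).
  apply: eq_bigr => x' _; apply: eq_bigr => y' _.
  rewrite (bigD1 m) //= big1 ?addr0; last first.
    by move=> w' /negPf ne; rewrite /rstate /= ne mulr0 !mul0r mulr0.
  rewrite /rstate /= eqxx Hh mul1r.
  have -> : chi (y' + (c + dot a x')) = chi c * chi (- (-1 * (dot a x' + y'))).
    by rewrite -chiD; congr chi; ring.
  case: (w == m); rewrite /=; ring.
under eq_bigr do rewrite -mulr_sumr; rewrite -mulr_sumr ortho ?oppr_eq0 ?oner_eq0 //.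
rewrite /vbas !xpair_eqE.
case: (w == m); case: (x == a); case: (y == 1); rewrite /= ?mul0r ?mul1r ?mulr0 //.
have := Ninv2 F n; move=> H2.
transitivity (om * chi c * (Ninv * Ninv * (#|F| ^ n.+1)%:R)); first ring.
by rewrite H2 !mulr1.
Qed.

Definition Ph (c : W -> vF -> F) : mat :=
  mk (fun s t => (s == t)%:R * chi (c t.2 t.1.1)).

Lemma Ph_unitary c : unitary (Ph c).
Proof.
apply: mk_unitary => s u.
rewrite (bigD1 s) //= big1 ?addr0; last first.
  by move=> t /negPf; rewrite eq_sym => ->; rewrite mul0r mul0r.
rewrite eqxx mul1r rmorphM /= chi_conj mulrCA chiN mulr1.
by rewrite eq_sym; case: (s == u); rewrite ?conjC1 ?conjC0.
Qed.

Lemma Ph_rstate c m om h :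
  Ph c *m vec (rstate m om h) = vec (rstate m om (fun x => h x + c m x)).
Proof.
rewrite mk_vec; apply: vecP => s.
rewrite (bigD1 s) //= big1 ?addr0; last first.
  by move=> t /negPf; rewrite eq_sym => ->; rewrite mul0r mul0r.
rewrite eqxx mul1r /rstate.
case E: (s.2 == m); last by rewrite /=; ring.
rewrite (eqP E) addrA [chi (_ + c m _)]chiD; ring.
Qed.

Definition vinv (v : vF) : vF := [ffun i => - v i].
Definition qshift (v : vF) (sg : F) (t : idx) : idx :=
  ([ffun i => t.1.1 i + v i], sg * t.1.2, t.2).
Definition qorac (g : vF -> F) (t : idx) : idx := (t.1.1, t.1.2 + g t.1.1, t.2).

Lemma oracleE g : oracle W g = pk (qorac g).
Proof.
apply/matrixP => i j; rewrite /oracle /pk /mk !mxE.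
by case: (enum_val j) => [[x y] w] /=; case: eqP.
Qed.

Lemma qshiftK (v : vF) sg : sg * sg = 1 -> cancel (qshift v sg) (qshift (vinv v) sg).
Proof.
move=> H [[x y] w]; rewrite /qshift /= mulrA H mul1r; congr (_, _, _).
by apply/ffunP => i; rewrite !ffunE addrK.
Qed.

Lemma qshiftK' (v : vF) sg : sg * sg = 1 -> cancel (qshift (vinv v) sg) (qshift v sg).
Proof.
move=> H [[x y] w]; rewrite /qshift /= mulrA H mul1r; congr (_, _, _).
by apply/ffunP => i; rewrite !ffunE subrK.
Qed.

Lemma qoracK g : cancel (qorac g) (fun t => (t.1.1, t.1.2 - g t.1.1, t.2)).
Proof. by move=> [[x y] w]; rewrite /qorac /= addrK. Qed.
Lemma qoracK' g : cancel (fun t => (t.1.1, t.1.2 - g t.1.1, t.2)) (qorac g).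
Proof. by move=> [[x y] w]; rewrite /qorac /= subrK. Qed.

Lemma query_rstate g v sg m om h : sg * sg = 1 ->
  pk (qshift (vinv v) sg) *m (oracle W g *m (pk (qshift v sg) *m vec (rstate m om h)))
  = vec (rstate m om (fun x => h x - sg * g [ffun i => x i + v i])).
Proof.
move=> H; rewrite oracleE.
rewrite (pk_vec _ (qshiftK v H) (qshiftK' v H)).
rewrite (pk_vec _ (qoracK g) (qoracK' g)).
rewrite (pk_vec _ (qshiftK' v H) (qshiftK v H)).
apply: vecP => [[[x y] w]]; rewrite /rstate /qshift /=.
have -> : [ffun i => [ffun i0 => x i0 + v i0] i + [ffun i0 => - v i0] i] = x.
  by apply/ffunP => i; rewrite !ffunE addrK.
congr (_ * _ * chi _ * _).
rewrite mulrBr mulrA H mul1r; ring.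
Qed.


Lemma qshift_unitary v sg : sg * sg = 1 -> unitary (pk (qshift v sg)).
Proof. by move=> H; apply: (pk_unitary (qshiftK v H) (qshiftK' v H)). Qed.
Lemma qshift_unitary' v sg : sg * sg = 1 -> unitary (pk (qshift (vinv v) sg)).
Proof. by move=> H; apply: (pk_unitary (qshiftK' v H) (qshiftK v H)). Qed.

End Gates.

Local Open Scope ring_scope.

Section Comb.
Variables (F : finFieldType) (n : nat).
Local Notation vF := {ffun 'I_n -> F}.
Local Notation sT := {set 'I_n}.

Definition ind (u : sT) : vF := [ffun i => (i \in u)%:R].
Definition sgn (T u : sT) : F := (-1) ^+ #|T :\: u|.
Definition mono (S T : sT) (x : vF) : F :=
  \prod_i (if i \in T then (i \in S)%:R else if i \in S then x i else 1).

Lemma FD (S T : sT) (x : vF) :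
  \sum_(u <- enum (powerset T)) sgn T u * \prod_(i in S) (x i + (i \in u)%:R)
  = mono S T x.
Proof.
pose Fi i : F := if i \in T then (if i \in S then x i + 1 else 1) else 0.
pose Gi i : F := if i \in T then - (if i \in S then x i else 1) else (if i \in S then x i else 1).
have -> : mono S T x = \prod_i (Fi i + Gi i).
  apply: eq_bigr => i _; rewrite /Fi /Gi.
  by case: (i \in T); case: (i \in S); rewrite /= ?add0r //; ring.
rewrite bigA_distr big_enum /=.
rewrite [RHS](bigID (fun J => J \in powerset T)) /= [X in _ = _ + X]big1 ?addr0.
  apply: eq_bigr => J; rewrite powersetE => /subsetP JT.
  rewrite /sgn -prodr_const (big_mkcond (fun i => i \in T :\: J)) (big_mkcond (fun i => i \in S)) -big_split /=.
  apply: eq_bigr => i _; rewrite /Fi /Gi inE.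
  case iJ: (i \in J); first by rewrite (JT _ iJ) /=; case: (i \in S); rewrite ?mul1r.
  by case: (i \in T); case: (i \in S); rewrite /= ?mul1r ?addr0 // mulN1r.
move=> J; rewrite powersetE => /subsetPn [i iJ niT].
by rewrite (bigD1 i) //= iJ /Fi (negbTE niT) mul0r.
Qed.

Definition mleval' (alpha : {ffun sT -> F}) (x : vF) : F :=
  \sum_(S : sT) alpha S * \prod_(i in S) x i.

Lemma KEY alpha (T : sT) (x : vF) :
  \sum_(u <- enum (powerset T)) sgn T u * mleval' alpha [ffun i => x i + ind u i]
  = \sum_S alpha S * mono S T x.
Proof.
under eq_bigr do rewrite /mleval' mulr_sumr.
rewrite exchange_big /=; apply: eq_bigr => S _.
rewrite -FD mulr_sumr; apply: eq_bigr => u _.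
rewrite mulrCA; congr (_ * (_ * _)); apply: eq_bigr => i _; by rewrite !ffunE.
Qed.

Lemma mono0 (S T : sT) (x : vF) : ~~ (T \subset S) -> mono S T x = 0.
Proof.
case/subsetPn => i iT niS.
by rewrite /mono (bigD1 i) //= iT (negbTE niS) mul0r.
Qed.

Lemma mono_sub (S T : sT) (x : vF) : T \subset S -> mono S T x = \prod_(i in S :\: T) x i.
Proof.
move/subsetP => TS; rewrite /mono [RHS]big_mkcond; apply: eq_bigr => i _.
rewrite inE; case iT: (i \in T); first by rewrite (TS _ iT).
by [].
Qed.


Definition aT (alpha : {ffun sT -> F}) (T : sT) : vF :=
  [ffun j : 'I_n => \sum_(S : sT | (T \subset S) && (#|S| == #|T|.+1) && (j \in S) && (j \notin T)) alpha S].

Lemma LIN (d : nat) (alpha : {ffun sT -> F}) (e : sT -> F) (T : sT) (x : vF) :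
  (forall S : sT, (d < #|S|)%N -> alpha S = 0) ->
  (forall S : sT, (T \subset S) && (#|T|.+2 <= #|S|)%N && (#|S| <= d)%N -> e S = alpha S) ->
  \sum_S alpha S * mono S T x
   - \sum_(S : sT | (T \subset S) && (#|T|.+2 <= #|S|)%N && (#|S| <= d)%N) e S * mono S T x
  = alpha T + dot (aT alpha T) x.
Proof.
move=> Hdeg He.
rewrite (bigID (fun S : sT => (T \subset S) && (#|T|.+2 <= #|S|)%N && (#|S| <= d)%N)) /=.
rewrite [X in _ - X](eq_bigr (fun S => alpha S * mono S T x)); last by move=> S /He ->.
rewrite addrAC subrr add0r.
transitivity (\sum_(S : sT | (T \subset S) && (#|S| <= #|T|.+1)%N) alpha S * mono S T x).
  rewrite big_mkcond [RHS]big_mkcond /=; apply: eq_bigr => S _.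
  case TS: (T \subset S); last first.
    have -> : mono S T x = 0 by apply: mono0; rewrite TS.
    by rewrite mulr0 /=.
  rewrite /=; case: (leqP #|S| #|T|.+1) => h1.
    by [].
  case: (leqP #|S| d) => h2 //=.
  by rewrite Hdeg // mul0r.
rewrite (bigD1 T) /=; last by rewrite subxx leqnSn.
rewrite mono_sub ?subxx // setDv big_set0 mulr1; congr (_ + _).
rewrite /dot.
under [RHS]eq_bigr do rewrite ffunE mulr_suml.
under [RHS]eq_bigr do rewrite big_mkcond.
rewrite exchange_big /= big_mkcond; apply: eq_bigr => S _.
have Hc : ((T \subset S) && (#|S| <= #|T|.+1)%N && (S != T)) =
          ((T \subset S) && (#|S| == #|T|.+1)).
  apply/idP/idP.
    case/andP => /andP [TS le] ne; rewrite TS /= eqn_leq le /=.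
    by rewrite ltnNge; apply: contra ne => h; rewrite eq_sym eqEcard TS.
  case/andP => TS /eqP e1; rewrite TS e1 leqnn /=.
  by apply/eqP => ST; move: e1; rewrite ST => /n_Sn.
rewrite Hc; case TS: (T \subset S) => /=; last first.
  by rewrite big1 // => j _; rewrite /=.
case e1: (#|S| == #|T|.+1) => /=; last first.
  by rewrite big1 // => j _; rewrite andbF.
have : #|S :\: T| == 1%N.
  by rewrite cardsD (setIidPr TS) (eqP e1) subSnn.
case/cards1P => j0 Ej.
rewrite mono_sub // Ej big_set1 (bigD1 j0) //=.
have : j0 \in S :\: T by rewrite Ej set11.
rewrite inE => /andP [-> ->] /=.
rewrite big1 ?addr0 // => j ne.
have : (j \in S) && (j \notin T) = false.
  apply/negbTE; apply/negP => /andP [jS jT].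
  have : j \in S :\: T by rewrite inE jS jT.
  by rewrite Ej inE (negbTE ne).
by rewrite andbC => ->.
Qed.
End Comb.

Local Open Scope ring_scope.

Section Round.
Variables (F : finFieldType) (n d : nat).
Local Notation vF := {ffun 'I_n -> F}.
Local Notation sT := {set 'I_n}.
Definition Wt := {ffun sT -> vF}.
Local Notation idx := (qidx F n Wt).
Local Notation mat := (qop F n Wt).
Local Notation chi := (@chi F).

Definition z0 : vF := [ffun => 0].
Definition est (m : Wt) (S : sT) : F :=
  if [pick j in S] is Some j then m (S :\ j) j else 0.
Definition Cnd (T S : sT) := (T \subset S) && (#|T|.+2 <= #|S|)%N && (#|S| <= d)%N.
Definition corr (T : sT) (m : Wt) (x : vF) : F :=
  - \sum_(S : sT | Cnd T S) est m S * mono S T x.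
Definition upd (m : Wt) (T : sT) (a : vF) : Wt := [ffun T' => if T' == T then a else m T'].
Definition store (T : sT) (t : idx) : idx :=
  (vinv (t.2 T), t.1.2, upd t.2 T [ffun i => t.2 T i + t.1.1 i]).
Definition store' (T : sT) (t : idx) : idx :=
  ([ffun i => t.2 T i + t.1.1 i], t.1.2, upd t.2 T (vinv t.1.1)).

Lemma storeK T : cancel (store T) (store' T).
Proof.
move=> [[x y] w]; rewrite /store /store' /upd /=; congr (_, _, _).
  by apply/ffunP => i; rewrite !ffunE eqxx ffunE addrAC subrr add0r.
apply/ffunP => T'; rewrite !ffunE; case: eqP => // ->.
by apply/ffunP => i; rewrite !ffunE opprK.
Qed.

Lemma storeK' T : cancel (store' T) (store T).
Proof.
move=> [[x y] w]; rewrite /store /store' /upd /=; congr (_, _, _).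
  by apply/ffunP => i; rewrite !ffunE eqxx ffunE opprK.
apply/ffunP => T'; rewrite !ffunE; case: eqP => // ->.
by apply/ffunP => i; rewrite !ffunE eqxx !ffunE; ring.
Qed.

Definition qry (T u : sT) : instr F n Wt :=
  Query (pk (qshift (ind F u) (- sgn F T u))) (pk (qshift (vinv (ind F u)) (- sgn F T u))).

Definition round (T : sT) : seq (instr F n Wt) :=
  Gate (Qe n Wt 1) :: [seq qry T u | u <- enum (powerset T)] ++
  [:: Gate (Ph (corr T)); Gate (Qe n Wt (-1)); Gate (pk (store T))].

Lemma sgn2 (T u : sT) : (- sgn F T u) * (- sgn F T u) = 1.
Proof. by rewrite mulrNN /sgn -exprMn mulrNN mulr1 expr1n. Qed.

Lemma rstate_ext (m : Wt) om (h1 h2 : vF -> F) : (forall x, h1 x = h2 x) ->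
  vec (rstate m om h1) = vec (rstate m om h2).
Proof. by move=> H; apply: vecP => t; rewrite /rstate H. Qed.

Lemma queries_exec g (T : sT) (us : seq sT) (m : Wt) om h :
  exec (oracle Wt g) [seq qry T u | u <- us] (vec (rstate m om h)) =
  vec (rstate m om (fun x => h x + \sum_(u <- us) sgn F T u * g [ffun i => x i + ind F u i])).
Proof.
elim: us h => [|u us IH] h /=.
  by apply: rstate_ext => x; rewrite big_nil addr0.
rewrite query_rstate ?sgn2 // IH; apply: rstate_ext => x.
by rewrite big_cons mulNr opprK addrA.
Qed.

Lemma vbas_comp (sg sg' : idx -> idx) (s : idx) c : cancel sg sg' -> cancel sg' sg ->
  vec (fun t => vbas s c (sg' t)) = vec (vbas (sg s) c).
Proof.
move=> c1 c2; apply: vecP => t; rewrite /vbas.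
have -> : (sg' t == s) = (t == sg s) by apply/eqP/eqP => [<-|->]; rewrite ?c1 ?c2.
by [].
Qed.

Lemma round_exec (alpha : coeffs F n) (m : Wt) om T :
  deg_le d alpha -> m T = z0 ->
  (forall S, Cnd T S -> est m S = alpha S) ->
  exec (oracle Wt (mleval alpha)) (round T) (vec (vbas (z0, 1, m) om)) =
  vec (vbas (z0, 1, upd m T (aT alpha T)) (om * chi (alpha T))).
Proof.
move=> Hdeg HmT Hest.
rewrite /round /exec /= -/(exec _ _ _) -/z0 Qe1_bas exec_cat queries_exec /=.
rewrite Ph_rstate (@Qm_rstate _ _ _ _ _ _ (alpha T) (aT alpha T)); last first.
  move=> x; rewrite add0r.
  have -> : \sum_(u <- enum (powerset T)) sgn F T u * mleval alpha [ffun i => x i + ind F u i]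
      = \sum_S alpha S * mono S T x by exact: KEY.
  rewrite /corr -(LIN (e := est m) x Hdeg) //.
rewrite (pk_vec _ (storeK T) (storeK' T)) (vbas_comp _ _ (storeK T) (storeK' T)).
congr (vec (vbas _ _)); rewrite /store /= HmT; congr (_, _, _).
  by apply/ffunP => i; rewrite !ffunE oppr0.
rewrite /upd; apply/ffunP => T'; rewrite !ffunE; case: (T' == T) => //.
by apply/ffunP => i; rewrite !ffunE add0r.
Qed.

End Round.

Local Open Scope ring_scope.

Section Global.
Variables (F : finFieldType) (n d : nat).
Local Notation vF := {ffun 'I_n -> F}.
Local Notation sT := {set 'I_n}.
Local Notation Wt := (Wt F n).
Local Notation idx := (qidx F n Wt).
Local Notation mat := (qop F n Wt).

Definition rsz (A B : sT) := (#|B| <= #|A|)%N.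
Definition Ts : seq sT := filter (fun T : sT => (#|T| < d)%N) (sort rsz (enum {: sT})).

Lemma rsz_trans : transitive rsz.
Proof. by move=> B A C h1 h2; rewrite /rsz (leq_trans h2 h1). Qed.
Lemma rsz_total : total rsz.
Proof. by move=> A B; rewrite /rsz leq_total. Qed.

Lemma Ts_sorted : sorted rsz Ts.
Proof. apply: sorted_filter; first exact: rsz_trans. exact: sort_sorted rsz_total _. Qed.

Lemma Ts_uniq : uniq Ts.
Proof. by rewrite filter_uniq // sort_uniq enum_uniq. Qed.

Lemma mem_Ts T : (T \in Ts) = (#|T| < d)%N.
Proof. by rewrite mem_filter mem_sort mem_enum andbT. Qed.

Lemma aT_pick (alpha : coeffs F n) (S : sT) j : j \in S -> aT alpha (S :\ j) j = alpha S.
Proof.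
move=> jS; rewrite ffunE (big_pred1 S) // => S'.
have cS : #|S| = (#|S :\ j|).+1 by rewrite (cardsD1 j S) jS.
apply/idP/eqP => [|->]; last by rewrite subD1set cS eqxx jS setD11.
case/andP => /andP [/andP [sub /eqP c] jS'] _.
apply/eqP; rewrite eq_sym eqEcard c -cS leqnn andbT.
by rewrite -(setD1K jS) subUset sub1set jS' sub.
Qed.

Definition prog : seq (instr F n Wt) :=
  flatten [seq round F d T | T <- Ts] ++ [:: Query 1%:M 1%:M].

Definition Mof (alpha : coeffs F n) (pre : seq sT) : Wt :=
  [ffun T => if T \in pre then aT alpha T else z0 F n].

Lemma est_Mof (alpha : coeffs F n) pre (S : sT) :
  (0 < #|S|)%N -> (forall j, j \in S -> S :\ j \in pre) ->
  est (Mof alpha pre) S = alpha S.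
Proof.
move=> S0 H; rewrite /est; case: pickP => [j jS|none].
  by rewrite ffunE (H j jS) aT_pick.
by move: S0; rewrite card_gt0 => /set0Pn [j jS]; move: (none j); rewrite /= jS.
Qed.

Lemma sorted_tail (pre post : seq sT) T : pre ++ T :: post = Ts ->
  forall X, X \in T :: post -> (#|X| <= #|T|)%N.
Proof.
move=> E X; have : sorted rsz (T :: post).
  apply: (subseq_sorted rsz_trans _ Ts_sorted); rewrite -E.
  by apply: suffix_subseq; apply/suffixP; exists pre.
move/(order_path_min rsz_trans) => /allP H.
rewrite in_cons => /orP [/eqP -> //|]; exact: H.
Qed.

Definition s0 : idx := (z0 F n, 1, [ffun _ => z0 F n]).
Definition out (t : idx) : coeffs F n :=
  [ffun S => if S == set0 then t.1.2 - 1 else if (#|S| <= d)%N then est t.2 S else 0].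

Lemma round_ok (T : sT) : ok_list (round F d T).
Proof.
rewrite /round /=; split; first by apply: Qe_unitary; rewrite oner_eq0.
apply: ok_list_cat.
  elim: (enum (powerset T)) => [|u us IHu] //=; split => //.
  by split; [apply: qshift_unitary | apply: qshift_unitary']; apply: sgn2.
split; first exact: Ph_unitary.
split; first by apply: Qe_unitary; rewrite oppr_eq0 oner_eq0.
split => //; exact: (pk_unitary (storeK T) (storeK' T)).
Qed.

Lemma prog_ok : ok_list prog.
Proof.
apply: ok_list_cat; last by split => //; split; apply: unitary1.
elim: Ts => [|T l IH] //.
rewrite (_ : flatten [seq round F d T0 | T0 <- T :: l] = round F d T ++ flatten [seq round F d T0 | T0 <- l]) //.
by apply: ok_list_cat => //; apply: round_ok.
Qed.

Variable alpha : coeffs F n.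
Hypothesis Hdeg : deg_le d alpha.
Local Notation O := (oracle Wt (mleval alpha)).

Lemma rounds_exec post : forall pre om, pre ++ post = Ts ->
  exists c, `|c| = 1 /\
  exec O (flatten [seq round F d T | T <- post]) (vec (vbas (z0 F n, 1, Mof alpha pre) om))
  = vec (vbas (z0 F n, 1, Mof alpha Ts) (om * c)).
Proof.
elim: post => [|T post IH] pre om E.
  by exists 1; rewrite normr1 mulr1 /= -E cats0.
have uq := Ts_uniq; rewrite -E cat_uniq /= negb_or in uq.
case/and3P: uq => _ /andP [TnP _] _.
have HmT : Mof alpha pre T = z0 F n by rewrite ffunE (negbTE TnP).
have Hest : forall S, Cnd d T S -> est (Mof alpha pre) S = alpha S.
  move=> S /andP [/andP [TS c2] c3].
  apply: est_Mof; first by apply: leq_trans c2.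
  move=> j jS.
  have cS : #|S| = (#|S :\ j|).+1 by rewrite (cardsD1 j S) jS.
  have inTs : S :\ j \in Ts by rewrite mem_Ts -ltnS -cS.
  move: inTs; rewrite -E mem_cat => /orP [//|inpost].
  have := sorted_tail E inpost; rewrite leqNgt => /negP; case.
  by rewrite -ltnS -cS.
rewrite (_ : flatten [seq round F d T0 | T0 <- T :: post] = round F d T ++ flatten [seq round F d T0 | T0 <- post]) //.
rewrite exec_cat (round_exec om Hdeg HmT Hest).
have -> : upd (Mof alpha pre) T (aT alpha T) = Mof alpha (rcons pre T).
  apply/ffunP => T'; rewrite !ffunE mem_rcons in_cons.
  by case: eqP => [->|_] //=.
have E2 : rcons pre T ++ post = Ts by rewrite cat_rcons.
have [c [c1 ->]] := IH (rcons pre T) (om * chi (alpha T)) E2.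
exists (chi (alpha T) * c); split; first by rewrite normrM chi_norm c1 mulr1.
by rewrite mulrA.
Qed.


Lemma mleval_z0 : mleval alpha (z0 F n) = alpha set0.
Proof.
rewrite /mleval (bigD1 set0) //= big_set0 mulr1 big1 ?addr0 // => S nS.
have [i iS] : exists i, i \in S by apply/set0Pn.
by rewrite (bigD1 i) //= ffunE mul0r mulr0.
Qed.

Lemma final_exec : exists c, `|c| = 1 /\
  exec O prog (vec (vbas s0 1)) = vec (vbas (z0 F n, 1 + alpha set0, Mof alpha Ts) c).
Proof.
have E0 : [ffun _ => z0 F n] = Mof alpha [::] by apply/ffunP => T; rewrite !ffunE.
have [c [c1 E]] := @rounds_exec Ts [::] 1 (cat0s Ts).
exists c; split => //.
rewrite /prog exec_cat /s0 E0 E /= mul1mx mul1mx oracleE mul1r.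
rewrite (pk_vec _ (qoracK _) (qoracK' _)) (vbas_comp _ _ (qoracK _) (qoracK' _)).
by rewrite /qorac /= mleval_z0.
Qed.

Lemma out_ok : out (z0 F n, 1 + alpha set0, Mof alpha Ts) = alpha.
Proof.
apply/ffunP => S; rewrite ffunE /=.
case: eqP => [->|nS]; first by rewrite addrAC subrr add0r.
case: leqP => hd; last by rewrite Hdeg.
apply: est_Mof; first by rewrite card_gt0; apply/eqP.
move=> j jS; rewrite mem_Ts.
by move: hd; rewrite (cardsD1 j S) jS add1n.
Qed.

Lemma succ_ok (s : idx) c : out s = alpha -> `|c| = 1 ->
  succ_prob out (vec (vbas s c)) alpha = 1.
Proof.
move=> Hs Hc; rewrite /succ_prob big_mkcond /=.
transitivity (\sum_(j < qdim F n Wt)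
   (fun t => if out t == alpha then `|vbas s c t| ^+ 2 else 0) (enum_val j)).
  by apply: eq_bigr => i _; rewrite mxE.
rewrite (sum_idx (fun t => if out t == alpha then `|vbas s c t| ^+ 2 else 0)) (bigD1 s) //= Hs eqxx big1 ?addr0.
  by rewrite /vbas eqxx mulr1 Hc expr1n.
by move=> t /negPf nt; rewrite /vbas nt mulr0 normr0 expr0n /= if_same.
Qed.

End Global.

Local Close Scope ring_scope.

Lemma bound_reindex m d :
  query_bound m d = (1 + \sum_(i < d) 2 ^ i * 'C(m, i))%N.
Proof.
rewrite /query_bound big_add1 /= big_mkord; congr (_ + _)%N.
by apply: eq_bigr => i _; rewrite subn1.
Qed.

Lemma sum_size_sets n k :
  (\sum_(T : {set 'I_n} | #|T| < k) 2 ^ #|T| = \sum_(i < k) 2 ^ i * 'C(n, i))%N.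
Proof.
elim: k => [|k IH]; first by rewrite big_ord0 big_pred0 // => T.
rewrite big_ord_recr /= -IH (bigID (fun T : {set 'I_n} => #|T| < k)) /=.
congr (_ + _)%N.
  by apply: eq_bigl => T; rewrite ltnS; case: leqP => h; rewrite ?andbT ?andbF // ltnW.
transitivity (\sum_(T in [set T : {set 'I_n} | #|T| == k]) 2 ^ k)%N.
  apply: eq_big => T; first by rewrite inE ltnS -leqNgt andbC -eqn_leq.
  by move=> H; case/andP: H => h1 h2; have -> : #|T| = k by apply/eqP; rewrite eqn_leq -ltnS h1 leqNgt h2.
by rewrite sum_nat_const card_draws card_ord mulnC.
Qed.

Lemma bin_le_exp m i : ('C(m, i) <= m ^ i)%N.
Proof.
apply: (@leq_trans ('C(m, i) * i`!)); first by rewrite leq_pmulr ?fact_gt0.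
rewrite bin_ffact ffact_prod.
apply: (@leq_trans (\prod_(j < i) m)); first by apply: leq_prod => j _; rewrite leq_subr.
by rewrite prod_nat_const card_ord.
Qed.

Lemma asym d : (1 <= d)%N ->
  exists C : nat, forall m : nat, (1 <= m)%N -> (query_bound m d <= C * m ^ d.-1)%N.
Proof.
move=> d1; exists (d * 2 ^ d).+1 => m m1.
rewrite bound_reindex mulSn leq_add //; first by rewrite expn_gt0 m1.
apply: (@leq_trans (\sum_(i < d) (2 ^ d * m ^ d.-1))).
  apply: leq_sum => i _; apply: leq_mul; first by rewrite leq_exp2l // ltnW.
  apply: (leq_trans (bin_le_exp m i)); apply: leq_pexp2l => //.
  by rewrite -ltnS prednK.
by rewrite sum_nat_const card_ord mulnA.
Qed.


Lemma qcount_round (F : finFieldType) n d (T : {set 'I_n}) : qcount (round F d T) = 2 ^ #|T|.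
Proof.
rewrite /round /= qcount_cat /= addn0 -card_powerset cardE.
by elim: (enum (powerset T)) => //= u us ->.
Qed.

Lemma qcount_prog (F : finFieldType) n d :
  qcount (prog F n d) = (\sum_(T <- Ts n d) 2 ^ #|T|).+1.
Proof.
rewrite /prog qcount_cat /= addn1; congr _.+1.
elim: (Ts n d) => [|T l IH]; first by rewrite big_nil.
rewrite big_cons -IH.
rewrite (_ : flatten [seq round F d T0 | T0 <- T :: l] = round F d T ++ flatten [seq round F d T0 | T0 <- l]) //.
by rewrite qcount_cat qcount_round.
Qed.

Lemma sum_Ts n d :
  (\sum_(T <- Ts n d) 2 ^ #|T| = \sum_(T : {set 'I_n} | #|T| < d) 2 ^ #|T|)%N.
Proof.
rewrite /Ts big_filter (perm_big (enum {: {set 'I_n}})); last by rewrite perm_sort.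
by rewrite big_enum_cond; apply: eq_bigl => T.
Qed.

Theorem theorem2 (F : finFieldType) (n d : nat) :
  (exists (W : finType) (T : nat) (s0 : qidx F n W)
          (U : nat -> qop F n W) (out : qidx F n W -> coeffs F n),
      (T <= query_bound n d)%N /\ exact_learner d T s0 U out)
  /\ ((1 <= d)%N ->
      exists C : nat, forall m : nat, (1 <= m)%N ->
        (query_bound m d <= C * m ^ d.-1)%N).
Proof.
split; last exact: asym.
exists (Wt F n), (qcount (prog F n d)), (s0 F n),
  (fun k => nth (1%:M)%R (Useq (compile (prog F n d))) k), (out d).
split.
  by rewrite qcount_prog sum_Ts sum_size_sets bound_reindex add1n.
split; first by move=> k _; apply: compile_unitary; apply: prog_ok.
move=> alpha Hdeg.
rewrite run_compile.
have -> : basis_vec (s0 F n) = vec (vbas (s0 F n) 1%R).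
  by apply/matrixP => i j; rewrite !mxE /vbas mul1r; case: eqP.
have [c [c1 ->]] := final_exec Hdeg.
exact: succ_ok (out_ok Hdeg) c1.
Qed.
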